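(* Let $N$ be a finite nonempty set, $p\notin N$ and $N'=N\cup\{p\}$. Let $\mathscr{C}=\{S_1,\dots,S_k\}$ be a minimal balanced collection on $N$ with (unique) balancing weights $(\lambda_{S_i})_{i\in[k]}$, where $[k]=\{1,\dots,k\}$. Let $I\subseteq[k]$ satisfy $\lambda_I:=\sum_{i\in I}\lambda_{S_i}=1$. Then $$\mathscr{C}'=\{S_i\cup\{p\}\mid i\in I\}\cup\{S_i\mid i\in[k]\setminus I\}$$ is a minimal balanced collection on $N'$.
   Context: For $T\subseteq N$, $\mathbf{1}^T\in\mathbb{R}^N$ denotes the characteristic vector of $T$ ($\mathbf{1}^T_i=1$ if $i\in T$, $0$ otherwise). A collection $\mathscr{B}$ of nonempty subsets of a finite set $N$ is balanced if there exist positive weights $(\lambda_S)_{S\in\mathscr{B}}$ (balancing weights) with $\sum_{S\in\mathscr{B}}\lambda_S\mathbf{1}^S=\mathbf{1}^N$. A balanced collection is minimal if it contains no balanced proper subcollection; equivalently, its system of balancing weights is unique. *)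

(* Defs.v *)
From HB Require Import structures.
From mathcomp Require Import all_boot all_order all_algebra.
From mathcomp Require Import reals.
Set Implicit Arguments. Unset Strict Implicit. Unset Printing Implicit Defensive.
Import Order.TTheory GRing.Theory Num.Theory.
Local Open Scope ring_scope.

Definition collection_on {T : finType} (N : {set T}) (B : {set {set T}}) : bool :=
  [forall S in B, (S != set0) && (S \subset N)].

Definition balancing_weights {R : realType} {T : finType} (N : {set T})
    (B : {set {set T}}) (lam : {set T} -> R) : Prop :=
  (forall S, S \in B -> 0 < lam S) /\
  (forall x : T, \sum_(S in B) lam S * (x \in S)%:R = (x \in N)%:R).

Definition balanced (R : realType) {T : finType} (N : {set T})
    (B : {set {set T}}) : Prop :=
  collection_on N B /\ exists lam : {set T} -> R, balancing_weights N B lam.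

Definition minimal_balanced (R : realType) {T : finType} (N : {set T})
    (B : {set {set T}}) : Prop :=
  balanced R N B /\ forall B' : {set {set T}}, B' \proper B -> ~ balanced R N B'.

(* Main.v *)
Require Import Defs.
From HB Require Import structures.
From mathcomp Require Import all_boot all_order all_algebra.
From mathcomp Require Import reals.
Import Order.TTheory GRing.Theory Num.Theory.
Local Open Scope ring_scope.

Theorem lemma4p1 (R : realType) (T : finType) (N : {set T}) (p : T)
    (C : {set {set T}}) (lam : {set T} -> R) (D : {set {set T}}) :
  N != set0 -> p \notin N ->
  minimal_balanced R N C ->
  balancing_weights N C lam ->
  D \subset C ->
  \sum_(S in D) lam S = 1 ->
  minimal_balanced R (p |: N)
    ([set S :|: [set p] | S in D] :|: (C :\: D)).
Proof.
move=> N0 pN [[colC _] minC] [lampos lamsum] DC sumD.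
have CN : forall S, S \in C -> S \subset N.
  by move=> S SC; move/forallP: colC => /(_ S); rewrite SC => /andP[].
have C0 : forall S, S \in C -> S != set0.
  by move=> S SC; move/forallP: colC => /(_ S); rewrite SC => /andP[].
have pS : forall S, S \in C -> p \notin S.
  by move=> S SC; apply: contra pN; apply: (subsetP (CN S SC)).
pose f S := if S \in D then S :|: [set p] else S.
have fK : forall S, S \in C -> f S :\ p = S.
  move=> S SC; rewrite /f; case: ifP => _.
    rewrite setDUl setDv setU0; apply/setDidPl.
    by rewrite disjoint_sym disjoints1 (pS S SC).
  by apply/setDidPl; rewrite disjoint_sym disjoints1 pS.
have finj : {in C &, injective f}.
  by move=> S1 S2 H1 H2 E; rewrite -(fK S1 H1) -(fK S2 H2) E.
have memf : forall S x, x != p -> (x \in f S) = (x \in S).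
  move=> S x xp; rewrite /f; case: ifP => // _.
  by rewrite !inE (negbTE xp) orbF.
have pf : forall S, S \in C -> (p \in f S) = (S \in D).
  move=> S SC; rewrite /f; case: ifP => SD.
    by rewrite !inE eqxx orbT.
  by rewrite (negbTE (pS S SC)).
have Cf : [set S :|: [set p] | S in D] :|: (C :\: D) = f @: C.
  apply/setP => y; rewrite !inE; apply/idP/imsetP.
    case/orP => [/imsetP[S SD ->]| /andP[yD yC]].
      by exists S; [apply: (subsetP DC) | rewrite /f SD].
    by exists y => //; rewrite /f (negbTE yD).
  case=> S SC ->; rewrite /f; case: ifP => SD.
    by apply/orP; left; apply/imsetP; exists S.
  by rewrite SD SC orbT.
rewrite Cf; split.
  split.
    apply/forallP => y; apply/implyP => /imsetP[S SC ->]; apply/andP; split.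
      apply/set0Pn; case/set0Pn: (C0 S SC) => x xS; exists x.
      by rewrite /f; case: ifP => // _; rewrite inE xS.
    apply/subsetP => x xf; rewrite inE.
    case: (eqVneq x p) => [->|xp]; first by rewrite !inE eqxx.
    rewrite !inE (negbTE xp) /=; rewrite (memf S x xp) in xf; exact: (subsetP (CN S SC) x xf).
  exists (fun y => lam (y :\ p)); split.
    by move=> y /imsetP[S SC ->]; rewrite fK //; exact: lampos.
  move=> x; rewrite big_imset //=.
  rewrite (eq_bigr (fun S => lam S * (x \in f S)%:R)); last first.
    by move=> S SC; rewrite fK.
  case: (eqVneq x p) => [->|xp].
    rewrite !inE eqxx /=.
    rewrite (eq_bigr (fun S => if S \in D then lam S else 0)); last first.
      by move=> S SC; rewrite pf //; case: (S \in D); rewrite ?mulr1 ?mulr0.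
    rewrite -big_mkcondr -sumD; apply: eq_bigl => S; apply/andb_idl => SD.
    exact: (subsetP DC S SD).
  rewrite !inE (negbTE xp) /= -lamsum; apply: eq_bigr => S SC; by rewrite memf.
move=> B' BP [colB [nu [nupos nusum]]].
pose B'' := [set S in C | f S \in B'].
have sB : B' \subset f @: C := proper_sub BP.
have fB : f @: B'' = B'.
  apply/setP=> y; apply/imsetP/idP.
    by case=> S; rewrite inE => /andP[_ ?] ->.
  move=> yB; case/imsetP: (subsetP sB y yB) => S SC E; exists S => //.
  by rewrite inE SC -E yB.
apply: (minC B'').
  rewrite properEneq; apply/andP; split.
    by apply/eqP => E; move: BP; rewrite -fB E properxx.
  by apply/subsetP => S; rewrite inE => /andP[].
split.
  apply/forallP => S; apply/implyP; rewrite inE => /andP[SC _].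
  by rewrite C0 // CN.
exists (fun S => nu (f S)); split.
  by move=> S; rewrite inE => /andP[_ H]; exact: nupos.
move=> x; case: (eqVneq x p) => [->|xp].
  rewrite (negbTE pN) big1 // => S; rewrite inE => /andP[SC _].
  by rewrite (negbTE (pS S SC)) mulr0.
have := nusum x; rewrite -fB big_imset /=; last first.
  by move=> S1 S2; rewrite !inE => /andP[H1 _] /andP[H2 _]; exact: finj.
rewrite !inE (negbTE xp) /= => <-; apply: eq_bigr => S; rewrite inE => /andP[SC _].
by rewrite memf.
Qed.
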